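(* Let $m,k$ be positive integers with $m>k+2$, and let $\pi$ be a permutation of $\mathbb{F}_{2^m}$ satisfying Property (P) (defined in the context). For each $z\in\mathbb{F}_{2^k}$ define $f^{(z)}:\mathbb{F}_{2^m}\times\mathbb{F}_{2^m}\to\mathbb{F}_2$ by \[ f^{(z)}(x_1,x_2)=\begin{cases}{\rm Tr}_1^m\bigl(x_1\,\pi(x_2)\bigr), & \text{if } {\rm Tr}_1^k(z)=0,\\ {\rm Tr}_1^m\bigl(x_2\,\pi(x_1)\bigr), & \text{if } {\rm Tr}_1^k(z)=1.\end{cases} \] Then the function $f:\mathbb{F}_{2^m}\times\mathbb{F}_{2^m}\times\mathbb{F}_{2^k}\times\mathbb{F}_{2^k}\to\mathbb{F}_2$, $f(x_1,x_2,y,z)=f^{(z)}(x_1,x_2)+{\rm Tr}_1^k(yz)$, is a GMM function that does not belong to the class $MM^{\#}$.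
   Context: ${\rm Tr}_a^b$ denotes the trace map from $\mathbb{F}_{2^b}$ to $\mathbb{F}_{2^a}$. Property (P) of a permutation $\pi$ of $\mathbb{F}_{2^m}$: for all $(a_1,a_2),(b_1,b_2)\in\mathbb{F}_{2^m}\times\mathbb{F}_{2^m}$, the two identities $\pi(x)+\pi(x+a_2)+\pi(x+b_2)+\pi(x+a_2+b_2)=0$ and ${\rm Tr}_1^m\bigl(a_1\pi(x+a_2)+b_1\pi(x+b_2)+(a_1+b_1)\pi(x+a_2+b_2)\bigr)=0$ hold for all $x\in\mathbb{F}_{2^m}$ if and only if one of the following holds: $(a_1,a_2)=(0,0)$, $(b_1,b_2)=(0,0)$, $(a_1,a_2)=(b_1,b_2)$, or $a_2=b_2=0$. A Boolean function $g$ on an $n$-dimensional $\mathbb{F}_2$-space $V$ is bent if $|\sum_{x\in V}(-1)^{g(x)+\langle b,x\rangle}|=2^{n/2}$ for all $b\in V$ (for a nondegenerate inner product). A GMM (generalized Maiorana–McFarland) function is a function of the form $f(x,y,z)=f^{(z)}(x)+{\rm Tr}_1^k(yz)$ on $W\times\mathbb{F}_{2^k}\times\mathbb{F}_{2^k}$ where every $f^{(z)}$ is bent on $W$. Two Boolean functions $f,g$ on $V$ are EA-equivalent if $g(x)=f(L(x)+a)+\langle c,x\rangle+b$ with $L$ a linear permutation of $V$, $a,c\in V$, $b\in\mathbb{F}_2$. The Maiorana–McFarland class $MM$ on $\mathbb{F}_{2^N}\times\mathbb{F}_{2^N}$ consists of functions ${\rm Tr}_1^N(x\pi'(y))+g(y)$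 with $\pi'$ a permutation of $\mathbb{F}_{2^N}$ and $g$ arbitrary; $MM^{\#}$ denotes the set of all Boolean functions on a $2N$-dimensional $\mathbb{F}_2$-space that are EA-equivalent (after an $\mathbb{F}_2$-linear identification of the space with $\mathbb{F}_{2^N}\times\mathbb{F}_{2^N}$) to a function of $MM$. *)

(* Defs.v *)
From HB Require Import structures.
From mathcomp Require Import all_boot all_order all_algebra.
Set Implicit Arguments. Unset Strict Implicit. Unset Printing Implicit Defensive.
Import Order.TTheory GRing.Theory Num.Theory.
Local Open Scope ring_scope.

(* Absolute trace Tr_1^n on a field of order 2^n, as an element of the field
   (it lies in the prime subfield {0,1}). *)
Definition tr (F : fieldType) (n : nat) (x : F) : F := \sum_(i < n) x ^+ (2 ^ i).

(* The same trace viewed as an element of F_2 = bool (xor is addition). *)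
Definition trb (F : fieldType) (n : nat) (x : F) : bool := tr n x == 1.

Definition propertyP (F : fieldType) (m : nat) (pi : F -> F) : Prop :=
  forall a1 a2 b1 b2 : F,
    ((forall x, pi x + pi (x + a2) + pi (x + b2) + pi (x + a2 + b2) = 0) /\
     (forall x, tr m (a1 * pi (x + a2) + b1 * pi (x + b2)
                      + (a1 + b1) * pi (x + a2 + b2)) = 0))
    <-> ((a1, a2) = (0, 0) \/ (b1, b2) = (0, 0) \/ (a1, a2) = (b1, b2)
         \/ (a2 = 0 /\ b2 = 0)).

Definition ip2 (F : fieldType) (n : nat) (u w : F * F) : bool :=
  trb n (u.1 * w.1 + u.2 * w.2).

Definition bent (F : finFieldType) (m : nat) (g : F * F -> bool) : Prop :=
  forall b : F * F,
    `| \sum_(w : F * F) (-1 : int) ^+ (g w (+) ip2 m b w) | = (2 ^ m)%:Z.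

Definition isGMM (F K : finFieldType) (m k : nat) (f : F * F * K * K -> bool)
  : Prop :=
  exists g : K -> F * F -> bool,
    (forall z, bent m (g z)) /\
    (forall (w : F * F) (y z : K), f (w, y, z) = g z w (+) trb k (y * z)).

(* F_2-linear map between F_2-spaces (in characteristic 2, additivity). *)
Definition additive_map (U V : zmodType) (phi : U -> V) : Prop :=
  forall u v, phi (u + v) = phi u + phi v.

Definition MMfun (L : fieldType) (N : nat) (pi' : L -> L) (g : L -> bool)
  (w : L * L) : bool := trb N (w.1 * pi' w.2) (+) g w.2.

Definition isMM (L : fieldType) (N : nat) (h : L * L -> bool) : Prop :=
  exists (pi' : L -> L) (g : L -> bool), bijective pi' /\ h =1 MMfun N pi' g.

(* MM#: f on the 2N-dimensional F_2-space V is in MM# if, after some F_2-linear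
   identification phi : V -> L x L (L = F_{2^N}), the function f o phi^-1 is
   EA-equivalent to an MM function h, i.e.
   (f o phi^-1)(w) = h(A w + a) + <c,w> + b with A a linear permutation. *)
Definition inMMsharp (V : zmodType) (L : fieldType) (N : nat) (f : V -> bool)
  : Prop :=
  exists phi : V -> L * L, additive_map phi /\ bijective phi /\
  exists h : L * L -> bool, isMM N h /\
  exists (A : L * L -> L * L) (a c : L * L) (b : bool),
    additive_map A /\ bijective A /\
    forall v : V, f v = h (A (phi v) + a) (+) ip2 N c (phi v) (+) b.

Definition fz (F K : finFieldType) (m k : nat) (pi : F -> F) (z : K)
  (w : F * F) : bool :=
  if tr k z == 0 then trb m (w.1 * pi w.2) else trb m (w.2 * pi w.1).

Definition fthm (F K : finFieldType) (m k : nat) (pi : F -> F)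
  (v : F * F * K * K) : bool :=
  fz m k pi v.2 v.1.1 (+) trb k (v.1.2 * v.2).

(* Main.v *)
Require Import Defs.
From HB Require Import structures.
From mathcomp Require Import all_boot all_order all_algebra all_field.
From mathcomp Require Import zify ring.
Set Implicit Arguments. Unset Strict Implicit. Unset Printing Implicit Defensive.
Import Order.TTheory GRing.Theory Num.Theory.
Local Open Scope ring_scope.

Section Tr.
Variables (F : finFieldType) (n : nat).
Hypothesis cardF : #|F| = (2 ^ n)%N.
Hypothesis n_gt0 : (0 < n)%N.

Lemma ch2 : 2%N \in [pchar F].
Proof. exact: (card_finPcharP cardF). Qed.

Lemma add2 (x : F) : x + x = 0.
Proof. exact: (@addrr_pchar2 F ch2). Qed.

Lemma sqD (x y : F) : (x + y) ^+ 2 = x ^+ 2 + y ^+ 2.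
Proof. by rewrite sqrrD mulr2n add2 addr0. Qed.

Lemma exp2D i (x y : F) : (x + y) ^+ (2 ^ i) = x ^+ (2 ^ i) + y ^+ (2 ^ i).
Proof. elim: i => [|i IH]; first by rewrite !expr1.
by rewrite expnSr !exprM IH sqD. Qed.

Lemma trD (x y : F) : tr n (x + y) = tr n x + tr n y.
Proof. by rewrite /tr -big_split; apply: eq_bigr => i _; rewrite exp2D. Qed.

Lemma tr0 : tr n (0 : F) = 0.
Proof. by rewrite /tr big1 // => i _; rewrite expr0n expn_eq0. Qed.

Lemma tr_sq (x : F) : tr n x ^+ 2 = tr n x.
Proof.
have -> : tr n x ^+ 2 = \sum_(i < n) (x ^+ (2 ^ i)) ^+ 2.
  rewrite /tr; apply: (big_morph (fun y : F => y ^+ 2)) => [y z|]; first exact: sqD.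
  by rewrite expr0n.
case: n cardF n_gt0 => // n' cF _.
rewrite /tr big_ord_recr big_ord_recl /= -exprM -expnSr -cF expf_card expr1 addrC.
by congr (_ + _); apply: eq_bigr => i _; rewrite -exprM -expnSr.
Qed.

Lemma tr01 (x : F) : tr n x = 0 \/ tr n x = 1.
Proof.
have : tr n x * (tr n x - 1) = 0 by rewrite mulrBr mulr1 -expr2 tr_sq subrr.
move/eqP; rewrite mulf_eq0 subr_eq0 => /orP [] /eqP H; [left|right] => //.
Qed.

Lemma trbD (x y : F) : trb n (x + y) = trb n x (+) trb n y.
Proof.
rewrite /trb trD; case: (tr01 x) => ->; case: (tr01 y) => ->;
  rewrite ?addr0 ?add0r ?add2 ?eqxx //= ?(eq_sym 0) oner_eq0 //.
Qed.

Lemma trb0 : trb n (0 : F) = false.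
Proof. by rewrite /trb tr0 eq_sym oner_eq0. Qed.

Lemma tr_exists1 : exists t : F, tr n t = 1.
Proof.
pose P : {poly F} := \sum_(i < n) 'X^(2 ^ i).
have PE x : P.[x] = tr n x by rewrite /P horner_sum; apply: eq_bigr => i _; rewrite hornerXn.
have [n' En] : exists n', n = n'.+1 by case: (n) n_gt0 => // n' _; exists n'.
have szP : size P = (2 ^ n').+1.
  rewrite /P En big_ord_recr /= addrC size_polyDl size_polyXn //.
  apply: (leq_ltn_trans (size_sum _ _ _)); rewrite ltnS.
  apply/bigmax_leqP => i _; rewrite size_polyXn ltn_exp2l //.
have P0 : P != 0 by rewrite -size_poly_eq0 szP.
have : ~~ all (root P) (enum F).
  apply/negP => Hall; have := max_poly_roots P0 Hall (enum_uniq _).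
  rewrite -cardE cardF En szP expnS mul2n -addnn ltnS.
  by rewrite -[X in (_ <= X)%N](add0n (2 ^ n')%N) leq_add2r leqn0 expn_eq0.
case/allPn => t _; rewrite /root PE => Ht; exists t.
by case: (tr01 t) Ht => ->; rewrite ?eqxx.
Qed.

Lemma charsum (e : F) :
  \sum_(x : F) (-1 : int) ^+ trb n (x * e) = if e == 0 then #|F|%:Z else 0.
Proof.
case: eqP => [->|/eqP e0].
  rewrite (eq_bigr (fun _ => 1)) ?sumr_const ?natz // => x _; by rewrite mulr0 trb0.
have [t Ht] := tr_exists1.
set S := \sum_(x : F) _.
have : S = - S.
  rewrite {1}/S (reindex_inj (addrI (t / e))) /=.
  rewrite /S -sumrN; apply: eq_bigr => x _.
  rewrite mulrDl divfK // trbD signr_addb.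
  have -> : trb n t = true by rewrite /trb Ht eqxx.
  by rewrite expr1 mulN1r.
move/eqP; rewrite -addr_eq0 -mulr2n -mulr_natl mulf_eq0 => /orP [//|/eqP ->//].
Qed.
End Tr.

Section Bent.
Variables (F : finFieldType) (m : nat).
Hypothesis cardF : #|F| = (2 ^ m)%N.
Hypothesis m_gt0 : (0 < m)%N.
Variables (pi : F -> F) (pi_bij : bijective pi).

Lemma bent1 : bent m (fun w : F * F => trb m (w.1 * pi w.2)).
Proof.
case: pi_bij => pinv piK pinvK.
move=> [b1 b2]; rewrite /ip2 /=.
rewrite -(pair_big xpredT xpredT (fun x1 x2 => (-1 : int) ^+ (trb m (x1 * pi x2) (+) trb m (b1 * x1 + b2 * x2)))) /=.
rewrite exchange_big /=.
rewrite (eq_bigr (fun x2 => (-1) ^+ trb m (b2 * x2) * (if x2 == pinv b1 then #|F|%:Z else 0))); last first.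
  move=> x2 _.
  have -> : (x2 == pinv b1) = (pi x2 + b1 == 0).
    rewrite addr_eq0 (oppr_pchar2 (ch2 cardF)).
    by apply/eqP/eqP => [->|<-]; rewrite ?piK ?pinvK.
  rewrite -(charsum cardF m_gt0) mulr_sumr; apply: eq_bigr => x1 _.
  rewrite -signr_addb; congr (_ ^+ _).
  rewrite !(trbD cardF m_gt0) mulrDr (mulrC x1 b1) (trbD cardF m_gt0).
  by case: (trb m (x1 * pi x2)); case: (trb m (b1*x1)); case: (trb m (b2*x2)).
rewrite (bigD1 (pinv b1)) //= eqxx big1 => [|i /negbTE -> ]; last by rewrite mulr0.
by rewrite addr0 normrM normr_sign mul1r cardF.
Qed.

Lemma bent2 : bent m (fun w : F * F => trb m (w.2 * pi w.1)).
Proof.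
move=> b; rewrite -(bent1 (b.2, b.1)).
rewrite (reindex_inj (h := fun w : F * F => (w.2, w.1))); last by move=> [? ?] [? ?] [-> ->].
congr (`|_|); apply: eq_bigr => w _; rewrite /ip2 /= addrC //.
Qed.

Lemma keyP (a1 a2 b1 b2 : F) :
  (forall x1 x2, trb m (x1 * pi x2) (+) trb m ((x1 + a1) * pi (x2 + a2))
     (+) trb m ((x1 + b1) * pi (x2 + b2)) (+) trb m ((x1 + a1 + b1) * pi (x2 + a2 + b2)) = false) ->
  (forall x, pi x + pi (x + a2) + pi (x + b2) + pi (x + a2 + b2) = 0) /\
  (forall x, tr m (a1 * pi (x + a2) + b1 * pi (x + b2) + (a1 + b1) * pi (x + a2 + b2)) = 0).
Proof.
move=> H.
have H' x1 x : trb m (x1 * (pi x + pi (x + a2) + pi (x + b2) + pi (x + a2 + b2))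
   + (a1 * pi (x + a2) + b1 * pi (x + b2) + (a1 + b1) * pi (x + a2 + b2))) = false.
  rewrite -(H x1 x) -!(trbD cardF m_gt0); congr (trb m _); ring.
have HC x : trb m (a1 * pi (x + a2) + b1 * pi (x + b2) + (a1 + b1) * pi (x + a2 + b2)) = false.
  by have := H' 0 x; rewrite mul0r add0r.
split => x.
  apply/eqP/negP => /negP E.
  have [t Ht] := tr_exists1 cardF m_gt0.
  have := H' (t / (pi x + pi (x + a2) + pi (x + b2) + pi (x + a2 + b2))) x.
  by rewrite (trbD cardF m_gt0) HC divfK // /trb Ht eqxx.
have := HC x; rewrite /trb; case: (tr01 cardF m_gt0 (a1 * pi (x + a2) + b1 * pi (x + b2) + (a1 + b1) * pi (x + a2 + b2))) => -> //.
by rewrite eqxx.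
Qed.
End Bent.

Section MMsec.
Variables (L : finFieldType) (N : nat).
Hypothesis cardL : #|L| = (2 ^ N)%N.
Hypothesis N_gt0 : (0 < N)%N.

Lemma ip2D (c p q : L * L) : ip2 N c (p + q) = ip2 N c p (+) ip2 N c q.
Proof. rewrite /ip2 /= -(trbD cardL N_gt0); congr (trb N _); ring. Qed.

Lemma D2_MM (pi' : L -> L) g (w : L * L) d d' :
  MMfun N pi' g w (+) MMfun N pi' g (w + (d, 0)) (+) MMfun N pi' g (w + (d', 0))
  (+) MMfun N pi' g (w + (d, 0) + (d', 0)) = false.
Proof.
rewrite /MMfun /= !addr0 !mulrDl !(trbD cardL N_gt0).
by case: (trb N (w.1 * _)); case: (trb N (d * _)); case: (trb N (d' * _)); case: (g _).
Qed.
End MMsec.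

Lemma xor4 (a1 a2 a3 a4 b1 b2 b3 b4 c : bool) :
  (a1 (+) b1 (+) c) (+) (a2 (+) b2 (+) c) (+) (a3 (+) b3 (+) c) (+) (a4 (+) b4 (+) c)
  = (a1 (+) a2 (+) a3 (+) a4) (+) (b1 (+) b2 (+) b3 (+) b4).
Proof. by case: a1; case: a2; case: a3; case: a4; case: b1; case: b2; case: b3; case: b4; case: c. Qed.

Section Fside.
Variables (F K : finFieldType) (m k : nat).
Hypothesis cardF : #|F| = (2 ^ m)%N.
Hypothesis m_gt0 : (0 < m)%N.
Hypothesis cardK : #|K| = (2 ^ k)%N.
Hypothesis k_gt0 : (0 < k)%N.
Variables (pi : F -> F) (HP : propertyP m pi).

Lemma D2_F (a1 a2 b1 b2 : F) (a3 b3 : K) :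
 (forall v : F * F * K * K, fthm m k pi v (+) fthm m k pi (v + (a1, a2, a3, 0))
    (+) fthm m k pi (v + (b1, b2, b3, 0))
    (+) fthm m k pi (v + (a1, a2, a3, 0) + (b1, b2, b3, 0)) = false) ->
 (a1, a2) = (0, 0) \/ (b1, b2) = (0, 0) \/ (a1, a2) = (b1, b2).
Proof.
move=> H.
have [z1 Hz1] := tr_exists1 cardK k_gt0.
have H0 x1 x2 : trb m (x1 * pi x2) (+) trb m ((x1 + a1) * pi (x2 + a2))
     (+) trb m ((x1 + b1) * pi (x2 + b2)) (+) trb m ((x1 + a1 + b1) * pi (x2 + a2 + b2)) = false.
  have := H (x1, x2, 0, 0); rewrite /fthm /fz /= !addr0 tr0 eqxx.
  by rewrite !mulr0 trb0 !addbF.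
have H1 x1 x2 : trb m (x1 * pi x2) (+) trb m ((x1 + a2) * pi (x2 + a1))
     (+) trb m ((x1 + b2) * pi (x2 + b1)) (+) trb m ((x1 + a2 + b2) * pi (x2 + a1 + b1)) = false.
  have := H (x2, x1, 0, z1); rewrite /fthm /fz /= !addr0 Hz1 oner_eq0 !add0r mul0r trb0.
  rewrite [(a3 + b3) * z1]mulrDl (trbD cardK k_gt0).
  by case: (trb m (x1 * pi x2)); case: (trb m ((x1 + a2) * pi (x2 + a1)));
     case: (trb m ((x1 + b2) * pi (x2 + b1))); case: (trb m ((x1 + a2 + b2) * pi (x2 + a1 + b1)));
     case: (trb k (a3 * z1)); case: (trb k (b3 * z1)).
have D1 := (proj1 (HP a1 a2 b1 b2)) (keyP cardF m_gt0 H0).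
have D2 := (proj1 (HP a2 a1 b2 b1)) (keyP cardF m_gt0 H1).
case: D1 => [|[|[|[E2 F2]]]]; try by auto.
subst a2 b2.
case: D2 => [|[|[|[-> ->]]]]; try (case=> *; subst); by [left | right; left | right; right].
Qed.
End Fside.

Theorem theorem3p7 (m k : nat) (F K L : finFieldType)
  (k_gt0 : (0 < k)%N) (hmk : (k + 2 < m)%N)
  (cardF : #|F| = (2 ^ m)%N) (cardK : #|K| = (2 ^ k)%N)
  (cardL : #|L| = (2 ^ (m + k))%N)
  (pi : F -> F) (pi_bij : bijective pi) (HP : propertyP m pi) :
  @isGMM F K m k (fthm m k pi) /\ ~ @inMMsharp _ L (m + k) (@fthm F K m k pi).
Proof.
have m_gt0 : (0 < m)%N by lia.
have NL : (0 < m + k)%N by lia.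
split.
  exists (fun z => fz m k pi z); split => [z|w y z //].
  rewrite /fz; case: (tr k z == 0); [exact: bent1 | exact: bent2].
move=> [phi [phiA [phiB [h [[pi' [g [pi'B hE]]] [A [a [c [b [AA [AB Hf]]]]]]]]]]].
have PsiB : bijective (A \o phi) := bij_comp AB phiB.
case: PsiB => Psi' HK HK'.
pose Phi (t : L) := Psi' (t, 0).
have PP t : A (phi (Phi t)) = (t, 0) by rewrite /Phi; exact: (HK' (t, 0)).
have PhiA s t : Phi (s + t) = Phi s + Phi t.
  apply: (can_inj HK); rewrite /= phiA AA !PP.
  by rewrite -[RHS]/(_ + _, _ + _) addr0.
have D2 d d' v : fthm m k pi v (+) fthm m k pi (v + Phi d) (+) fthm m k pi (v + Phi d')
    (+) fthm m k pi (v + Phi d + Phi d') = false.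
  rewrite !Hf !phiA !AA !PP !ip2D // !hE.
  set w := A (phi v).
  have -> : w + (d, 0) + (d', 0) + a = w + a + (d, 0) + (d', 0).
    by rewrite addrAC [w + (d, 0) + a]addrAC.
  rewrite [w + (d, 0) + a]addrAC [w + (d', 0) + a]addrAC xor4 D2_MM //.
  by case: (ip2 _ c (phi v)); case: (ip2 _ c (phi (Phi d))); case: (ip2 _ c (phi (Phi d'))).
have Hno d d' : (Phi d).2 = 0 -> (Phi d').2 = 0 -> (Phi d).1.1 != 0 ->
    (Phi d').1.1 != 0 -> (Phi d).1.1 != (Phi d').1.1 -> False.
  move: (D2 d d'); case: (Phi d) => [[[a1 a2] a3] a4]; case: (Phi d') => [[[b1 b2] b3] b4] /=.
  move=> H E4 E4'; subst a4 b4.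
  move=> n1 n2 n3; case: (D2_F cardF m_gt0 cardK k_gt0 HP H) => [E|[E|E]].
  - by move: n1; rewrite E eqxx.
  - by move: n2; rewrite E eqxx.
  - by move: n3; rewrite E eqxx.
pose key t := ((Phi t).1.2, (Phi t).2).
pose r t := odflt 0 [pick s | key s == key t].
have rP t : key (r t) = key t.
  rewrite /r; case: pickP => [s /eqP //| /(_ t)]; by rewrite eqxx.
have Z t : (Phi (t + r t)).1.2 = 0 /\ (Phi (t + r t)).2 = 0.
  have := rP t; rewrite /key PhiA; case=> E1 E2.
  rewrite -[(_ + _).1.2]/(_ + _) -[(_ + _).2]/(_ + _) E1 E2.
  by split; apply: (add2 cardK).
have Phi_inj : injective Phi.
  move=> s s' /(f_equal (A \o phi)); rewrite /= !PP; by case.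
have eqV (u u' : F * F * K * K) : u.1.1 = u'.1.1 -> u.1.2 = u'.1.2 -> u.2 = u'.2 -> u = u'.
  by case: u u' => [[? ?] ?] [[? ?] ?] /= -> -> ->.
pose iota t := (key t, (Phi (t + r t)).1.1 != 0).
have iota_inj : injective iota.
  move=> t t' [Ek1 Ek2 Eb].
  have Ek : key t = key t' by rewrite /key Ek1 Ek2.
  have Er : r t = r t' by rewrite /r Ek.
  suff : Phi (t + r t) = Phi (t' + r t') by move/Phi_inj; rewrite Er; apply: addIr.
  have [Z1 Z2] := Z t; have [Z1' Z2'] := Z t'.
  have [E|NE] := eqVneq (Phi (t + r t)).1.1 (Phi (t' + r t')).1.1.
    by apply: eqV => //; rewrite ?Z1 ?Z1' ?Z2 ?Z2'.
  exfalso; have [E0|N0] := eqVneq (Phi (t + r t)).1.1 0.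
    by move: Eb NE; rewrite E0 eqxx /= => /esym/negbFE/eqP ->; rewrite eqxx.
  move: Eb; rewrite N0 => /esym N0'.
  exact: (Hno _ _ Z2 Z2' N0 N0' NE).
have := leq_card iota iota_inj; rewrite !card_prod card_bool cardL cardK.
rewrite -expnD -[X in (_ <= _ * X)%N](expn1 2) -expnD leq_exp2l //.
lia.
Qed.
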